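(* Let $A=\begin{bmatrix}a&b\\c&d\end{bmatrix}$ be a real $2\times2$ matrix with two distinct real standard eigenvalues, at least one of which, $\lambda_A$, is an interior L-eigenvalue of $A$, and suppose $\lambda_A\neq a$. Then for every $\varepsilon>0$ there is $\delta>0$ such that every real $2\times 2$ matrix $B$ with $\|B-A\|_F<\delta$ has an interior L-eigenvalue $\lambda_B$ with $|\lambda_A-\lambda_B|<\varepsilon$.
   Context: $\|\cdot\|_F$ is the Frobenius norm. Lorentz cone $\mathcal{K}=\{(x_1,x_2)^T:|x_1|\le x_2\}$; a real $\lambda$ is an L-eigenvalue of $A$ if there is a nonzero $x\in\mathcal{K}$ with $(A-\lambda I)x\in\mathcal{K}$ and $x^T(A-\lambda I)x=0$; it is an interior L-eigenvalue if such $x$ can be taken in the interior of $\mathcal{K}$. Standard eigenvalues are roots of the characteristic polynomial. *)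

(* Defs.v *)
From HB Require Import structures.
From mathcomp Require Import all_boot all_order all_algebra.
From mathcomp Require Import reals.
Set Implicit Arguments. Unset Strict Implicit. Unset Printing Implicit Defensive.
Import Order.TTheory GRing.Theory Num.Theory.
Local Open Scope ring_scope.

(* Index 0 = first coordinate x_1, index 1 = second coordinate x_2. *)

Definition lorentz {R : realType} (x : 'cV[R]_2) : bool :=
  `|x 0 0| <= x 1 0.

Definition lorentz_int {R : realType} (x : 'cV[R]_2) : bool :=
  `|x 0 0| < x 1 0.

Definition frob {R : realType} (M : 'M[R]_2) : R :=
  Num.sqrt (\sum_(i < 2) \sum_(j < 2) M i j ^+ 2).

Definition L_eig_vec {R : realType} (A : 'M[R]_2) (lam : R) (x : 'cV[R]_2) : Prop :=
  x != 0 /\ lorentz x /\ lorentz ((A - lam%:M) *m x) /\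
  ((x^T *m (A - lam%:M) *m x) 0 0 = 0).

Definition is_L_eig {R : realType} (A : 'M[R]_2) (lam : R) : Prop :=
  exists x : 'cV[R]_2, L_eig_vec A lam x.

Definition is_interior_L_eig {R : realType} (A : 'M[R]_2) (lam : R) : Prop :=
  exists x : 'cV[R]_2, L_eig_vec A lam x /\ lorentz_int x.

Definition is_std_eig {R : realType} (A : 'M[R]_2) (lam : R) : Prop :=
  root (char_poly A) lam.

(* Main.v *)
From HB Require Import structures.
From mathcomp Require Import all_boot all_order all_algebra.
From mathcomp Require Import reals.
From mathcomp Require Import ring lra.
Require Import Defs.
Import Order.TTheory GRing.Theory Num.Theory.
Local Open Scope ring_scope.
Lemma mulmx2 (R : realType) (M : 'M[R]_2) (v : 'cV[R]_2) i : (M *m v) i 0 = M i 0 * v 0 0 + M i 1 * v 1 0.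
Proof. rewrite mxE !big_ord_recl big_ord0 addr0. have -> : (lift ord0 ord0 : 'I_2) = 1 by exact: val_inj. by []. Qed.
Lemma quad2 (R : realType) (M : 'M[R]_2) (x : 'cV[R]_2) :
  (x^T *m M *m x) 0 0 = x 0 0 * (M *m x) 0 0 + x 1 0 * (M *m x) 1 0.
Proof.
rewrite -mulmxA mxE !big_ord_recl big_ord0 addr0 !mxE.
have -> : (lift ord0 ord0 : 'I_2) = 1 by exact: val_inj. by [].
Qed.
Lemma cone0 (R : realType) (x0 x1 y0 y1 : R) : `|x0| < x1 -> `|y0| <= y1 -> x0*y0 + x1*y1 = 0 -> y0 = 0 /\ y1 = 0.
Proof.
move=> hx hy h.
have h1 : - (x0*y0) <= `|x0| * `|y0| by rewrite -normrM; have := ler_norm (- (x0*y0)); rewrite normrN.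
have h2 : `|x0| * `|y0| <= `|x0| * y1 by apply: ler_wpM2l.
have hy1 : y1 = 0 by have := normr_ge0 x0; have := normr_ge0 y0; nra.
split=> //; apply/normr0_eq0; have := normr_ge0 y0; lra.
Qed.
Lemma frob_entry (R : realType) (M : 'M[R]_2) dl i j : frob M < dl -> `|M i j| < dl.
Proof.
rewrite /frob => h.
apply: le_lt_trans h.
rewrite -sqrtr_sqr ler_sqrt; last first.
  by apply: sumr_ge0 => k _; apply: sumr_ge0 => l _; apply: sqr_ge0.
rewrite (bigD1 i) //= (bigD1 j) //= -addrA lerDl.
apply: addr_ge0; first by apply: sumr_ge0 => l _; apply: sqr_ge0.
by apply: sumr_ge0 => k _; apply: sumr_ge0 => l _; apply: sqr_ge0.
Qed.
Lemma disc_bound (R : realType) (a b c d p q r w dl : R) : dl <= 1 ->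
  `|p| < dl -> `|q| < dl -> `|r| < dl -> `|w| < dl ->
  `|(((a+p)-(d+q))^+2 + 4*(b+r)*(c+w)) - ((a-d)^+2+4*b*c)| <= 8*(1+`|a|+`|b|+`|c|+`|d|)*dl.
Proof.
move=> h1 hp hq hr hw.
have -> : (((a+p)-(d+q))^+2 + 4*(b+r)*(c+w)) - ((a-d)^+2+4*b*c) = (p-q)*((p-q)+2*(a-d)) + 4*((b+r)*w + c*r) by ring.
have hpq : `|p - q| <= 2 * dl by have := ler_normB p q; lra.
have e1 : `|(p-q)*((p-q)+2*(a-d))| <= 2*dl*(2*dl+2*(`|a|+`|d|)).
  rewrite normrM; apply: ler_pM => //.
  have := ler_normD (p-q) (2*(a-d)); have := ler_normB a d; rewrite normrM ger0_norm //; lra.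
have e2 : `|(b+r)*w + c*r| <= (`|b|+dl)*dl + `|c|*dl.
  have := ler_normD ((b+r)*w) (c*r); rewrite !normrM.
  have := ler_normD b r.
  have : `|b+r| * `|w| <= (`|b|+dl)*dl.
    apply: ler_pM => //; [have := ler_normD b r|]; lra.
  have : `|c| * `|r| <= `|c|*dl by apply: ler_wpM2l => //; lra.
  lra.
have := ler_normD ((p-q)*((p-q)+2*(a-d))) (4*((b+r)*w + c*r)).
rewrite (normrM 4) (ger0_norm (_ : 0 <= 4)) //.
have ha := normr_ge0 a; have hb := normr_ge0 b; have hc := normr_ge0 c; have hd := normr_ge0 d.
have h0 : 0 <= dl by have := normr_ge0 p; lra.
nra.
Qed.
Lemma l01 : (lift ord0 (0:'I_1) : 'I_2) = 1. Proof. exact: val_inj. Qed.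
Lemma l10 : (lift (1:'I_2) (0:'I_1) : 'I_2) = 0. Proof. exact: val_inj. Qed.
Lemma char2 (R : realType) (A : 'M[R]_2) l : (char_poly A).[l] = (l - A 0 0) * (l - A 1 1) - A 0 1 * A 1 0.
Proof.
rewrite /char_poly /char_poly_mx (expand_det_row _ ord0) !big_ord_recl big_ord0 /cofactor.
rewrite !det_mx11 !mxE /= !l01.
rewrite !hornerE /= l10. 
have -> : (ord0 : 'I_2) = 0 by []. ring.
Qed.
Theorem lemma4p6 (R : realType) (A : 'M[R]_2) (lamA : R) :
  (exists mu : R, is_std_eig A mu /\ mu != lamA) ->
  is_std_eig A lamA ->
  is_interior_L_eig A lamA ->
  lamA != A 0 0 ->
  forall eps : R, 0 < eps ->
  exists delta : R, 0 < delta /\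
    forall B : 'M[R]_2, frob (B - A) < delta ->
      exists lamB : R, is_interior_L_eig B lamB /\ `|lamA - lamB| < eps.
Proof.
move=> [mu [Hmu Hne]] HA [x [[xnz [_ [yK xq]]] xint]] Hla eps Heps.
move: HA Hmu; rewrite /is_std_eig /root !char2 => /eqP hl /eqP hmu.
rewrite /lorentz_int in xint; rewrite /lorentz in yK.
rewrite quad2 in xq.
have y0E : ((A - lamA%:M) *m x) 0 0 = (A 0 0 - lamA) * x 0 0 + A 0 1 * x 1 0.
  by rewrite mulmx2 !mxE /=; ring.
have y1E : ((A - lamA%:M) *m x) 1 0 = A 1 0 * x 0 0 + (A 1 1 - lamA) * x 1 0.
  by rewrite mulmx2 !mxE /=; ring.
have [hy0 _] := cone0 _ _ _ _ _ xint yK xq.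
rewrite y0E in hy0.
clear y0E y1E xq yK xnz.
set a := A 0 0 in hl hmu hy0 Hla *; set b := A 0 1 in hl hmu hy0 *;
set c := A 1 0 in hl hmu *; set d := A 1 1 in hl hmu *.
set X0 := x 0 0 in hy0 xint *; set X1 := x 1 0 in hy0 xint *.
have hX1 : 0 < X1 by have := normr_ge0 X0; lra.
have hla0 : lamA - a != 0 by rewrite subr_eq0.
have hmuE : mu = a + d - lamA.
  have : (lamA - mu) * (lamA + mu - a - d) = 0.
    have -> : (lamA - mu) * (lamA + mu - a - d) = ((lamA - a) * (lamA - d) - b * c) - ((mu - a) * (mu - d) - b * c) by ring.
    by rewrite hl hmu subrr.
  move/eqP; rewrite mulf_eq0 => /orP [|]; first by rewrite subr_eq0 eq_sym (negbTE Hne).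
  by move/eqP => h; lra.
pose e := lamA - mu.
have he0 : e != 0 by rewrite /e subr_eq0 eq_sym.
have heE : e = 2 * lamA - a - d by rewrite /e hmuE; ring.
have he2 : e ^+ 2 = (a - d) ^+ 2 + 4 * b * c.
  rewrite heE; have : (2 * lamA - a - d) ^+ 2 - ((a - d) ^+ 2 + 4 * b * c) = 4 * ((lamA - a) * (lamA - d) - b * c) by ring.
  by rewrite hl mulr0 => /eqP; rewrite subr_eq0 => /eqP.
pose t := X1 / (lamA - a).
have hX1t : X1 = t * (lamA - a) by rewrite /t divfK.
have hX0t : X0 = t * b.
  apply: (mulIf hla0); rewrite -mulrA (mulrC b) mulrA -hX1t; nra.
pose g := X1 - `|X0|.
have hg : 0 < g by rewrite /g; lra.
have hae : 0 < `|e| by rewrite normr_gt0.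
pose u := e / `|e|.
have hu1 : u * `|e| = e by rewrite /u divfK // normr_eq0.
have hu2 : u ^+ 2 = 1.
  rewrite /u expr_div_n real_normK ?num_real // divff // expf_neq0 //.
have hun : `|u| = 1 by rewrite /u normrM normfV normr_id divff // normr_eq0.
pose Mc : R := 1 + `|a| + `|b| + `|c| + `|d|.
have hMc : 0 < Mc by rewrite /Mc; have := normr_ge0 a; have := normr_ge0 b; have := normr_ge0 c; have := normr_ge0 d; lra.
pose K : R := 8 * Mc.
have hK : 0 < K by rewrite /K; lra.
pose C : R := 1 + K / `|e|.
have hC : 0 < C by rewrite /C; have := divr_gt0 hK hae; lra.
pose T : R := `|t|.
have hT : 0 <= T by apply: normr_ge0.
pose dl := Num.min 1 (Num.min (e ^+ 2 / K) (Num.min (eps / (2 * C)) (g / (T * (C + 2) + 1)))).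
have hTC : 0 < T * (C + 2) + 1.
  have : 0 <= T * (C + 2) by apply: mulr_ge0 => //; lra.
  lra.
have he2p : 0 < e ^+ 2 by rewrite -real_normK ?num_real // exprn_gt0.
have hdl0 : 0 < dl.
  rewrite /dl !lt_min ltr01 /= !divr_gt0 //; lra.
exists dl; split=> //.
have := le_refl dl; rewrite {2}/dl !le_min => /andP [hd1 /andP [hdK /andP [hdC hdg]]].
rewrite ler_pdivlMr // in hdK; rewrite ler_pdivlMr ?mulr_gt0 // in hdC; rewrite ler_pdivlMr // in hdg.
move=> B hB.
have hp : `|B 0 0 - a| < dl.
  have := frob_entry _ _ _ 0 0 hB. by rewrite !mxE.
have hq : `|B 1 1 - d| < dl.
  have := frob_entry _ _ _ 1 1 hB. by rewrite !mxE.
have hr : `|B 0 1 - b| < dl.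
  have := frob_entry _ _ _ 0 1 hB. by rewrite !mxE.
have hw : `|B 1 0 - c| < dl.
  have := frob_entry _ _ _ 1 0 hB. by rewrite !mxE.
set a1 := B 0 0 in hp *; set b1 := B 0 1 in hr *; set c1 := B 1 0 in hw *; set d1 := B 1 1 in hq *.
have hD := disc_bound _ a b c d (a1-a) (d1-d) (b1-b) (c1-c) dl hd1 hp hq hr hw.
rewrite !subrKC -/Mc -/K -he2 in hD.
pose DB := (a1 - d1) ^+ 2 + 4 * b1 * c1.
rewrite -/DB in hD.
have hDB0 : 0 <= DB.
  have := ler_norm (- (DB - e ^+ 2)); rewrite normrN => h.
  have : K * dl <= e ^+ 2 by rewrite mulrC.
  lra.
pose sB := Num.sqrt DB.
have hsB2 : sB ^+ 2 = DB by rewrite sqr_sqrtr.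
have hsB0 : 0 <= sB by apply: sqrtr_ge0.
have hae2 : `|e| ^+ 2 = e ^+ 2 by rewrite real_normK ?num_real.
have hZ : `|sB - `|e| | * `|e| <= K * dl.
  have h1 : `|sB - `|e| | * `|e| <= `|sB - `|e| | * (sB + `|e|) by apply: ler_wpM2l; [apply: normr_ge0 | lra].
  have hpos : 0 <= sB + `|e| by lra.
  have h2 : `|sB - `|e| | * (sB + `|e|) = `|DB - e ^+ 2|.
    rewrite -{1}(ger0_norm hpos) -normrM; congr `|_|; rewrite -hsB2 -hae2; ring.
  lra.
have hZ2 : `|sB - `|e| | <= dl * (K / `|e|).
  by rewrite mulrA ler_pdivlMr // (mulrC dl).
pose lamB := (a1 + d1 + u * sB) / 2.
have hlB : 2 * (lamB - lamA) = (a1 - a) + (d1 - d) + u * (sB - `|e|).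
  by rewrite /lamB (mulrBr u) hu1 heE; field.
have hlB2 : `|lamA - lamB| <= dl * C.
  have h1 : `|2 * (lamB - lamA)| = 2 * `|lamA - lamB| by rewrite normrM distrC ger0_norm.
  have h2 := ler_normD (a1 - a + (d1 - d)) (u * (sB - `|e|)).
  have h3 := ler_normD (a1 - a) (d1 - d).
  rewrite normrM hun mul1r -hlB h1 in h2.
  rewrite /C mulrDr mulr1; have := mulr_ge0 (ltW hdl0) (ltW (divr_gt0 hK hae)); lra.
have hch : (lamB - a1) * (lamB - d1) = b1 * c1.
  have -> : (lamB - a1) * (lamB - d1) = ((u ^+ 2) * (sB ^+ 2) - (a1 - d1) ^+ 2) / 4 by rewrite /lamB; field.
  by rewrite hu2 hsB2 /DB; field.
have hint : `|t * b1| < t * (lamB - a1).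
  have e1 : t * b1 = X0 + t * (b1 - b) by rewrite hX0t; ring.
  have e2 : t * (lamB - a1) = X1 + t * ((lamB - lamA) - (a1 - a)) by rewrite hX1t; ring.
  have f1 := ler_normD X0 (t * (b1 - b)).
  rewrite normrM -/T in f1.
  have f2 : T * `|b1 - b| <= T * dl by apply: ler_wpM2l => //; lra.
  have f3 := ler_norm (- (t * ((lamB - lamA) - (a1 - a)))).
  rewrite normrN normrM -/T in f3.
  have f4 := ler_normB (lamB - lamA) (a1 - a).
  have f5 : T * `|lamB - lamA - (a1 - a)| <= T * (dl * C + dl).
    apply: ler_wpM2l => //; rewrite distrC in hlB2; lra.
  rewrite e1 e2.
  rewrite mulrDr mulr1 in hdg.
  have : T * (dl * C + dl) + T * dl < g.
    have -> : T * (dl * C + dl) + T * dl = dl * (T * (C + 2)) by ring.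
    lra.
  rewrite /g in hg *. lra.
pose v : 'cV[R]_2 := \matrix_(i < 2, j < 1) (if i == 0 then t * b1 else t * (lamB - a1)).
have hv0 : v 0 0 = t * b1 by rewrite mxE.
have hv1 : v 1 0 = t * (lamB - a1) by rewrite mxE.
have z0 : ((B - lamB%:M) *m v) 0 0 = 0.
  rewrite mulmx2 hv0 hv1 !mxE /= -/a1 -/b1; ring.
have z1 : ((B - lamB%:M) *m v) 1 0 = 0.
  rewrite mulmx2 hv0 hv1 !mxE /= -/c1 -/d1.
  have -> : (c1 - lamB *+ 0) * (t * b1) + (d1 - lamB *+ 1) * (t * (lamB - a1)) = t * (b1 * c1 - (lamB - a1) * (lamB - d1)) by ring.
  by rewrite hch subrr mulr0.
exists lamB; split; last by lra.
exists v; split; last by rewrite /lorentz_int hv0 hv1.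
split.
  apply/negP => /eqP hv; have : v 1 0 = 0 by rewrite hv mxE.
  rewrite hv1 => h0; rewrite h0 in hint; have := normr_ge0 (t * b1); lra.
split; first by rewrite /lorentz hv0 hv1 ltW.
split; first by rewrite /lorentz z0 z1 normr0.
by rewrite quad2 z0 z1 !mulr0 addr0.
Qed.
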